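(* Let $R$ be a commutative ring. The following are equivalent: (1) $R$ is clean; (2) $R$ is feckly clean and $R$ is a pm ring; (3) $R$ is feckly clean and whenever $a,b\in R$ satisfy $a+b=1$ there exist $r,s\in R$ with $(1+ar)(1+bs)=0$.
   Context: Rings have identity; $J(R)$ is the Jacobson radical. A ring is clean if every element is the sum of an idempotent and a unit. An element $u\in R$ is full if $RuR=R$. An element $a\in R$ is feckly clean if there exist $e\in R$ and a full element $u\in R$ with $a=e+u$ and $eR(1-e)\subseteq J(R)$; $R$ is feckly clean if every element is feckly clean. A commutative ring is a pm ring if every prime ideal is contained in exactly one maximal ideal. *)

(* Defs.v *)
From HB Require Import structures.
From mathcomp Require Import all_boot all_order all_algebra.
Set Implicit Arguments. Unset Strict Implicit. Unset Printing Implicit Defensive.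
Import GRing.Theory.
Local Open Scope ring_scope.

Section Defs.
Variable R : comPzRingType.

Definition is_unit (u : R) : Prop := exists v : R, u * v = 1 /\ v * u = 1.
Definition is_idem (e : R) : Prop := e * e = e.

Definition is_ideal (I : R -> Prop) : Prop :=
  [/\ I 0, (forall x y, I x -> I y -> I (x + y)) & (forall r x, I x -> I (r * x))].
Definition proper_ideal (I : R -> Prop) : Prop := is_ideal I /\ ~ I 1.
Definition maximal_ideal (M : R -> Prop) : Prop :=
  proper_ideal M /\
  forall I : R -> Prop, proper_ideal I -> (forall x, M x -> I x) -> forall x, I x -> M x.
Definition prime_ideal (P : R -> Prop) : Prop :=
  proper_ideal P /\ forall a b, P (a * b) -> P a \/ P b.

Definition jacobson (x : R) : Prop := forall M, maximal_ideal M -> M x.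

(* u is full: the two-sided ideal RuR generated by u is R *)
Definition full (u : R) : Prop :=
  exists n (r s : 'I_n -> R), \sum_(i < n) r i * u * s i = 1.

Definition clean_ring : Prop :=
  forall a : R, exists e u, is_idem e /\ is_unit u /\ a = e + u.

Definition feckly_clean_elt (a : R) : Prop :=
  exists e u, full u /\ a = e + u /\ (forall r, jacobson (e * r * (1 - e))).
Definition feckly_clean_ring : Prop := forall a : R, feckly_clean_elt a.

Definition pm_ring : Prop :=
  forall P, prime_ideal P ->
    exists M, [/\ maximal_ideal M, (forall x, P x -> M x) &
      forall M', maximal_ideal M' -> (forall x, P x -> M' x) -> forall x, M' x <-> M x].
End Defs.

(* Main.v *)
Require Import Defs.
From HB Require Import structures.
From mathcomp Require Import all_boot all_order all_algebra.
From mathcomp Require Import boolp classical_sets.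
From Stdlib Require Import Classical.
From mathcomp Require Import ring.
Import GRing.Theory.
Local Open Scope classical_set_scope.
Local Open Scope ring_scope.

Lemma ideal0 {R : comPzRingType} {I : R -> Prop} : is_ideal I -> I 0.
Proof. by case. Qed.
Lemma idealD {R : comPzRingType} {I : R -> Prop} x y : is_ideal I -> I x -> I y -> I (x + y).
Proof. by case=> _ H _; apply: H. Qed.
Lemma idealMl {R : comPzRingType} {I : R -> Prop} r x : is_ideal I -> I x -> I (r * x).
Proof. by case=> _ _ H; apply: H. Qed.
Lemma idealMr {R : comPzRingType} {I : R -> Prop} r x : is_ideal I -> I x -> I (x * r).
Proof. by move=> HI Hx; rewrite mulrC; apply: idealMl. Qed.
Lemma idealN {R : comPzRingType} {I : R -> Prop} x : is_ideal I -> I x -> I (- x).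
Proof. by move=> HI Hx; rewrite -mulN1r; apply: idealMl. Qed.
Lemma idealB {R : comPzRingType} {I : R -> Prop} x y : is_ideal I -> I x -> I y -> I (x - y).
Proof. by move=> HI Hx Hy; apply: idealD => //; apply: idealN. Qed.

Lemma zorn_ideal {R : comPzRingType} (I0 S : R -> Prop) :
  is_ideal I0 -> (forall x, I0 x -> ~ S x) ->
  exists P, [/\ is_ideal P, (forall x, I0 x -> P x), (forall x, P x -> ~ S x) &
    forall Q, is_ideal Q -> (forall x, P x -> Q x) -> (forall x, Q x -> ~ S x) ->
      forall x, Q x -> P x].
Proof.
move=> HI0 HS.
pose Good (A : set R) := [/\ is_ideal A, (forall x, I0 x -> A x) & (forall x, A x -> ~ S x)].
have GI0 : Good I0 by split.
have nonempty_good (F : set (set R)) X x :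
    F `<=` (fun A => Good A \/ A = set0) -> F X -> X x -> Good X.
  move=> FP FX Xx; case: (FP X FX) => // X0; by rewrite X0 in Xx.
case: (@Zorn_bigcup R (fun A => Good A \/ A = set0)).
  move=> F FP Ftot.
case: (classic (exists X, F X /\ exists x, X x)) => [[X [FX [x Xx]]]|none].
  have GX := nonempty_good _ _ _ FP FX Xx.
  left; split.
  - split.
    + exists X => //; exact: ideal0 (let: And3 h _ _ := GX in h).
    + move=> a b [Xa Fa aa] [Xb Fb bb].
      have [ab|ba] := Ftot _ _ Fa Fb.
      * exists Xb => //; have [hb _ _] := nonempty_good _ _ _ FP Fb bb.
        by apply: idealD => //; apply: ab.
      * exists Xa => //; have [ha _ _] := nonempty_good _ _ _ FP Fa aa.
        by apply: idealD => //; apply: ba.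
    + move=> r a [Xa Fa aa]; exists Xa => //.
      have [ha _ _] := nonempty_good _ _ _ FP Fa aa; exact: idealMl.
  - by move=> y Iy; exists X => //; case: GX => _ h _; apply: h.
  - move=> y [Y FY Yy]; have [_ _ h] := nonempty_good _ _ _ FP FY Yy; exact: h.
right; apply/seteqP; split => y; last by [].
  by move=> [Y FY Yy]; exfalso; apply: none; exists Y; split => //; exists y.
move=> A [PA Amax].
  have GA : Good A.
    case: PA => // A0; exfalso; apply: (Amax I0); last by left.
    rewrite A0; split; first by move=> x [].
    by move=> H; have := H 0 (ideal0 HI0).
  exists A; case: GA => H1 H2 H3; split => // Q HQ AQ QS x Qx.
  apply: NNPP => nAx; apply: (Amax Q); last by left; split => // y /H2 /AQ.
  by split => // H; apply: nAx; apply: H.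
Qed.

Lemma unit_ideal {R : comPzRingType} {I : R -> Prop} u v :
  is_ideal I -> I u -> u * v = 1 -> I 1.
Proof. by move=> HI Iu <-; apply: idealMr. Qed.

Lemma ideal_addelt {R : comPzRingType} {M : R -> Prop} (a : R) :
  is_ideal M -> is_ideal (fun x => exists m r, M m /\ x = m + r * a).
Proof.
move=> HM; split.
- by exists 0, 0; split; [exact: ideal0|rewrite mul0r addr0].
- move=> x y [m [r [Mm ->]]] [m' [r' [Mm' ->]]]; exists (m + m'), (r + r'); split.
    exact: idealD.
  ring.
- move=> s x [m [r [Mm ->]]]; exists (s * m), (s * r); split; first exact: idealMl.
  ring.
Qed.

Lemma Madd {R : comPzRingType} {M : R -> Prop} {a : R} :
  maximal_ideal M -> ~ M a -> exists m r, M m /\ 1 = m + r * a.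
Proof.
move=> [[HM M1] Mmax] nMa; apply: NNPP => H.
have HQ := ideal_addelt a HM.
have nQ1 : ~ (fun x => exists m r, M m /\ x = m + r * a) 1.
  by move=> -[m [r [Mm E]]]; apply: H; exists m, r.
apply: nMa; apply: (Mmax _ (conj HQ nQ1)).
- by move=> x Mx; exists x, 0; rewrite mul0r addr0.
- by exists 0, 1; split; [exact: ideal0|rewrite mul1r add0r].
Qed.

Lemma max_prime {R : comPzRingType} {M : R -> Prop} {a b : R} :
  maximal_ideal M -> M (a * b) -> M a \/ M b.
Proof.
move=> HM Mab; case: (classic (M a)) => Ma; [by left|right].
have [m [r [Mm E]]] := Madd HM Ma.
have -> : b = m * b + r * (a * b) by rewrite mulrA -mulrDl -E mul1r.
have [[HI _] _] := HM.
by apply: (idealD _ _ HI); [apply: idealMr|apply: idealMl].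
Qed.

Lemma exists_max {R : comPzRingType} {I0 : R -> Prop} :
  is_ideal I0 -> ~ I0 1 -> exists M, maximal_ideal M /\ forall x, I0 x -> M x.
Proof.
move=> HI0 nI1.
have [|P [HP I0P PS Pmax]] := @zorn_ideal R I0 (fun x => x = 1) HI0.
  by move=> x Ix E; apply: nI1; rewrite -E.
exists P; split => //; split.
  by split => // P1; apply: (PS 1 P1).
move=> I [HI nI] PI; apply: Pmax => // x Ix E; apply: nI; by rewrite -E.
Qed.

Lemma unit_of_nomax {R : comPzRingType} (x : R) :
  (forall M, maximal_ideal M -> ~ M x) -> is_unit x.
Proof.
move=> H; apply: NNPP => nu.
have HI : is_ideal (fun y => exists r, y = x * r).
  split.
  - by exists 0; rewrite mulr0.
  - by move=> y z [r ->] [s ->]; exists (r + s); rewrite mulrDr.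
  - by move=> s y [r ->]; exists (s * r); ring.
have [|M [HM IM]] := exists_max HI.
  by move=> [r E]; apply: nu; exists r; split; [|rewrite mulrC]; rewrite -E.
by apply: (H M HM); apply: IM; exists 1; rewrite mulr1.
Qed.

Lemma prime_of_disjoint {R : comPzRingType} (P S : R -> Prop) :
  S 1 -> (forall x y, S x -> S y -> S (x * y)) ->
  is_ideal P -> (forall x, P x -> ~ S x) ->
  (forall Q, is_ideal Q -> (forall x, P x -> Q x) -> (forall x, Q x -> ~ S x) ->
      forall x, Q x -> P x) ->
  prime_ideal P.
Proof.
move=> S1 SM HP PS Pmax; split; first by split => // P1; exact: PS 1 P1 S1.
have key c : ~ P c -> exists s p t, [/\ S s, P p & s = p + t * c].
  move=> nPc; apply: NNPP => H; apply: nPc.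
  apply: (Pmax _ (ideal_addelt c HP)).
  - by move=> x Px; exists x, 0; rewrite mul0r addr0.
  - by move=> x [m [r [Mm E]]] Sx; apply: H; exists x, m, r.
  - by exists 0, 1; split; [exact: ideal0|rewrite mul1r add0r].
move=> a b Pab; apply: NNPP => H.
have [s1 [p1 [t1 [S1' P1 E1]]]] := key a (fun h => H (or_introl h)).
have [s2 [p2 [t2 [S2' P2 E2]]]] := key b (fun h => H (or_intror h)).
apply: (PS (s1 * s2)); last exact: SM.
have -> : s1 * s2 = p1 * (p2 + t2 * b) + (t1 * a) * p2 + (t1 * t2) * (a * b)
  by rewrite E1 E2; ring.
apply: (idealD _ _ HP); first apply: (idealD _ _ HP).
- exact: (idealMr _ _ HP P1).
- exact: (idealMl _ _ HP P2).
- exact: (idealMl _ _ HP Pab).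
Qed.

Lemma clean_F {R : comPzRingType} : clean_ring R -> feckly_clean_ring R.
Proof.
move=> Hc a; have [e [u [He [[v [uv vu]] ->]]]] := Hc a.
exists e, u; split; last split => //.
  by exists 1%N, (fun _ => v), (fun _ => 1); rewrite big_ord1 mulr1.
move=> r M [[HM _] _].
have -> : e * r * (1 - e) = 0 by rewrite mulrBr mulr1 mulrAC He subrr.
exact: ideal0.
Qed.

Lemma clean_pm_aux {R : comPzRingType} {P M M' : R -> Prop} :
  clean_ring R -> prime_ideal P -> maximal_ideal M -> maximal_ideal M' ->
  (forall x, P x -> M x) -> (forall x, P x -> M' x) -> forall x, M x -> M' x.
Proof.
move=> Hc [[HP _] Pp] HM HM' PM PM' x Mx; apply: NNPP => nM'x.
have [m [r [M'm E]]] := Madd HM' nM'x.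
have [e [u [He [[v [uv vu]] ha]]]] := Hc (r * x).
have [[HMi M1] _] := HM; have [[HMi' M1'] _] := HM'.
have : P (e * (1 - e)) by rewrite mulrBr mulr1 He subrr; exact: ideal0.
move=> /Pp [Pe|Pe].
  apply: M1; apply: (unit_ideal u v) => //.
  have -> : u = r * x - e by rewrite ha; ring.
  by apply: idealB => //; [apply: idealMl|apply: PM].
apply: M1'; apply: (unit_ideal u v) => //.
have -> : u = (1 - e) - m.
  have -> : u = r * x - e by rewrite ha; ring.
  by rewrite E; ring.
by apply: idealB => //; apply: PM'.
Qed.

Lemma clean_pm {R : comPzRingType} : clean_ring R -> pm_ring R.
Proof.
move=> Hc P HPp; have [[HP nP1] _] := HPp.
have [M [HM PM]] := exists_max HP nP1.
exists M; split => // M' HM' PM' x; split.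
- exact: (clean_pm_aux Hc HPp HM' HM PM' PM).
- exact: (clean_pm_aux Hc HPp HM HM' PM PM').
Qed.

Lemma pm_cond {R : comPzRingType} : pm_ring R ->
  forall a b : R, a + b = 1 -> exists r s : R, (1 + a * r) * (1 + b * s) = 0.
Proof.
move=> Hpm a b ab1; apply: NNPP => H.
pose S := fun z : R => exists r s, z = (1 + a * r) * (1 + b * s).
have S1 : S 1 by exists 0, 0; rewrite !mulr0 addr0 mulr1.
have SM : forall x y, S x -> S y -> S (x * y).
  move=> x y [r [s ->]] [r' [s' ->]].
  by exists (r + r' + a * r * r'), (s + s' + b * s * s'); ring.
have HI0 : is_ideal (fun x : R => x = 0).
  by split => //; [move=> x y -> ->; rewrite addr0 | move=> r x ->; rewrite mulr0].
have [|P [HP _ PS Pmax]] := @zorn_ideal R _ S HI0.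
  by move=> x -> [r [s E]]; apply: H; exists r, s; rewrite -E.
have HPp := @prime_of_disjoint R P S S1 SM HP PS Pmax.
have nQa : ~ (fun x => exists m r, P m /\ x = m + r * a) 1.
  move=> [p [t [Pp E]]]; apply: (PS p Pp); exists (- t), 0.
  have -> : p = 1 - t * a by rewrite E; ring.
  ring.
have nQb : ~ (fun x => exists m r, P m /\ x = m + r * b) 1.
  move=> [p [t [Pp E]]]; apply: (PS p Pp); exists 0, (- t).
  have -> : p = 1 - t * b by rewrite E; ring.
  ring.
have [M1 [HM1 QM1]] := exists_max (ideal_addelt a HP) nQa.
have [M2 [HM2 QM2]] := exists_max (ideal_addelt b HP) nQb.
have M1a : M1 a by apply: QM1; exists 0, 1; split; [exact: ideal0|ring].
have M2b : M2 b by apply: QM2; exists 0, 1; split; [exact: ideal0|ring].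
have PM1 : forall x, P x -> M1 x by move=> x Px; apply: QM1; exists x, 0; split => //; ring.
have PM2 : forall x, P x -> M2 x by move=> x Px; apply: QM2; exists x, 0; split => //; ring.
have [M [HM PM U]] := Hpm P HPp.
have Ma := (U M1 HM1 PM1 a).1 M1a.
have Mb := (U M2 HM2 PM2 b).1 M2b.
have [[HMi M1'] _] := HM; apply: M1'; rewrite -ab1; exact: idealD.
Qed.

Lemma F_cond_clean {R : comPzRingType} : feckly_clean_ring R ->
  (forall a b : R, a + b = 1 -> exists r s : R, (1 + a * r) * (1 + b * s) = 0) ->
  clean_ring R.
Proof.
move=> HF Hc a.
have [e [u [[n [rr [ss Hu]]] [ha HJ]]]] := HF a.
have [t ut] : exists t, u * t = 1.
  exists (\sum_(i < n) rr i * ss i); rewrite -Hu mulr_sumr.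
  by apply: eq_bigr => i _; ring.
have Jee : forall M, maximal_ideal M -> M e \/ M (1 - e).
  move=> M HM; apply: max_prime => //; have := HJ 1 M HM; by rewrite mulr1.
have e1 : e + (1 - e) = 1 by rewrite addrC subrK.
have [r [s Exy]] := Hc e (1 - e) e1.
set x := 1 + e * r in Exy; set y := 1 + (1 - e) * s in Exy.
have cases : forall M, maximal_ideal M ->
    (M e /\ ~ M x /\ M y) \/ (M (1 - e) /\ M x /\ ~ M y).
  move=> M HM; have [[HMi M1] _] := HM.
  have Mxy : M (x * y) by rewrite Exy; exact: ideal0.
  case: (Jee M HM) => Me; [left|right]; split => //.
  - have nx : ~ M x.
      move=> Mx; apply: M1; have -> : 1 = x - e * r by rewrite /x; ring.
      by apply: idealB => //; apply: idealMr.
    split => //; case: (max_prime HM Mxy) => //.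
  - have ny : ~ M y.
      move=> My; apply: M1; have -> : 1 = y - (1 - e) * s by rewrite /y; ring.
      by apply: idealB => //; apply: idealMr.
    split => //; case: (max_prime HM Mxy) => //.
have [w [wv vw]] : is_unit (x + y).
  apply: unit_of_nomax => M HM Mw; have [[HMi M1] _] := HM.
  case: (cases M HM) => [[_ [nx My]]|[_ [Mx ny]]].
  - apply: nx; have -> : x = (x + y) - y by ring.
    exact: idealB.
  - apply: ny; have -> : y = (x + y) - x by ring.
    exact: idealB.
pose f := y * w.
have Hf : f * f = f.
  have E : f * (1 - f) = 0.
    have -> : 1 - f = x * w by rewrite /f -wv; ring.
    by rewrite /f mulrACA (mulrC y x) Exy mul0r.
  have -> : f * f = f - f * (1 - f) by ring.
  by rewrite E subr0.
have fe : forall M, maximal_ideal M -> M (f - e).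
  move=> M HM; have [[HMi M1] _] := HM.
  case: (cases M HM) => [[Me [_ My]]|[Me [Mx _]]].
  - by apply: idealB => //; apply: idealMr.
  - have -> : f - e = (1 - e) - x * w by rewrite /f -wv; ring.
    by apply: idealB => //; apply: idealMr.
exists f, (u + e - f); split => //; split; last by rewrite ha; ring.
apply: unit_of_nomax => M HM Mu; have [[HMi M1] _] := HM.
apply: M1; rewrite -ut; apply: idealMr => //.
have -> : u = (u + e - f) + (f - e) by ring.
by apply: idealD => //; apply: fe.
Qed.

Theorem theorem5p6 (R : comPzRingType) :
  (clean_ring R <-> (feckly_clean_ring R /\ pm_ring R)) /\
  (clean_ring R <->
     (feckly_clean_ring R /\
      forall a b : R, a + b = 1 -> exists r s : R, (1 + a * r) * (1 + b * s) = 0)).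
Proof.
split; split.
- by move=> Hc; split; [exact: clean_F|exact: clean_pm].
- by move=> [HF Hpm]; apply: F_cond_clean => //; exact: pm_cond.
- by move=> Hc; split; [exact: clean_F|exact: pm_cond (clean_pm Hc)].
- by move=> [HF H]; exact: F_cond_clean.
Qed.
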